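(* Let $\tilde X$ be an $n\times n$ periodic block band matrix with atom variable $\xi$ and bandwidth $b_n$, where $\mathbb{E}\xi=0$, $\mathbb{E}|\xi|^2=1$ and $\mathbb{E}|\xi|^{4p}<\infty$ for some integer $p\ge1$; let $c_n=3b_n$, $X=\tilde X/\sqrt{c_n}$, $X_z=X-zI$ for fixed $z\in\mathbb{C}$, $A>1$, and $m_{n,z}(\zeta)=\frac1n\sum_{i=1}^n[\lambda_i(X_zX_z^* )-\zeta]^{-1}$. Then for every $\zeta$ with $-A<\Re\zeta<A$, $0<\Im\zeta<1$, $$|1-r_{n,z}(\zeta)|\ge\frac{|\Im\zeta|}{4\sqrt A},$$ where $r_{n,z}(\zeta)=f(m_{n,z}(\zeta))f(m_z(\zeta))\left[\frac{|z|^2}{(1+m_{n,z}(\zeta))(1+m_z(\zeta))}+\zeta\right]$.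
   Context: Periodic block band matrix: $b_n$ divides $n$, $m:=n/b_n$; $\tilde D_i,\tilde U_i,\tilde T_i$ ($i\in[m]$) are $3m$ independent $b_n\times b_n$ random matrices with iid entries distributed as $\xi$; $\tilde X$ is the $m\times m$ block matrix (block indices modulo $m$) with $(i,i)$ block $\tilde D_i$, $(i,i-1)$ block $\tilde T_{i-1}$, $(i,i+1)$ block $\tilde U_{i+1}$, other blocks zero. $f(s):=\left[\frac{|z|^2}{1+s}-(1+s)\zeta\right]^{-1}$. $m_z(\zeta)$ is the Stieltjes transform of the probability measure $\nu_z$ on $[0,\infty)$, characterized as the unique solution of $m_z=f(m_z)$ with $\Im(\zeta m_z(\zeta^2))>0$ and $\Im m_z(\zeta)>0$ when $\Im\zeta>0$; square roots use the principal branch (cut along the negative real axis). *)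

(* Defs.v *)
From HB Require Import structures.
From mathcomp Require Import all_boot all_order all_algebra.
From mathcomp Require Import all_classical all_reals all_analysis.
From mathcomp Require Import complex.
Set Implicit Arguments. Unset Strict Implicit. Unset Printing Implicit Defensive.
Import Order.TTheory GRing.Theory Num.Theory.
Local Open Scope ring_scope.
Local Open Scope classical_set_scope.

Section Defs.
Variable R : realType.
Local Notation C := R[i].

Definition mxnat (b : nat) (M : 'M[C]_b) (p q : nat) : C :=
  match (insub p : option 'I_b), (insub q : option 'I_b) with
  | Some p', Some q' => M p' q'
  | _, _ => 0
  end.

(* Periodic block band matrix tilde X of size n = m*b built from the blocks
   D_i, U_i, T_i (i in [m], i.e. indices 0..m-1, block indices modulo m):
   block (i,i) = D_i, block (i,i-1) = T_(i-1), block (i,i+1) = U_(i+1),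
   all other blocks zero.  (If m <= 2, coinciding block positions receive the
   sum of the corresponding blocks.)  Row index k lies in block k %/ b at
   offset k %% b. *)
Definition periodic_band (b m : nat) (D U T : nat -> 'M[C]_b) : 'M[C]_(m * b) :=
  \matrix_(k, l)
    (let i := (k %/ b)%N in let j := (l %/ b)%N in
     let p := (k %% b)%N in let q := (l %% b)%N in
     let im1 := ((i + m.-1) %% m)%N in let ip1 := (i.+1 %% m)%N in
       (if j == i then mxnat (D i) p q else 0)
     + (if j == im1 then mxnat (T im1) p q else 0)
     + (if j == ip1 then mxnat (U ip1) p q else 0)).

Definition adjmx (n : nat) (M : 'M[C]_n) : 'M[C]_n := (map_mx Num.conj M)^T.

Definition fz (z zeta s : C) : C :=
  (`|z| ^+ 2 / (1 + s) - (1 + s) * zeta)^-1.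

(* Stieltjes transform of a measure nu on R:  int 1/(x - zeta) dnu(x),
   written out via real and imaginary parts:
   1/(x - zeta) = ((x - Re zeta) + i Im zeta) / ((x - Re zeta)^2 + Im zeta^2). *)
Definition stieltjes (nu : {measure set R -> \bar R}) (zeta : C) : C :=
  let a := complex.Re zeta in let c := complex.Im zeta in
  Complex (\int[nu]_(x in setT) ((x - a) / ((x - a) ^+ 2 + c ^+ 2)))
          (\int[nu]_(x in setT) (c / ((x - a) ^+ 2 + c ^+ 2))).

(* empirical Stieltjes transform (1/n) sum_i 1/(lambda_i - zeta)
   for an eigenvalue list s (with multiplicity) *)
Definition emp_stieltjes (n : nat) (s : seq C) (zeta : C) : C :=
  (n%:R)^-1 * \sum_(lam <- s) (lam - zeta)^-1.

Definition rnz (z zeta mn mz : C) : C :=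
  fz z zeta mn * fz z zeta mz * (`|z| ^+ 2 / ((1 + mn) * (1 + mz)) + zeta).

End Defs.

(* Main.v *)
Require Import Defs.
From HB Require Import structures.
From mathcomp Require Import all_boot all_order all_algebra.
From mathcomp Require Import all_classical all_reals all_analysis.
From mathcomp Require Import complex.
From mathcomp Require Import ring lra.
Import Order.TTheory GRing.Theory Num.Theory.
Local Open Scope ring_scope.
Local Open Scope classical_set_scope.

Set Implicit Arguments. Unset Strict Implicit.

Section H.
Variable R : rcfType.
Implicit Types x y : R[i].

Definition nsq x : R := complex.Re x ^+ 2 + complex.Im x ^+ 2.
Definition cj x : R[i] := Complex (complex.Re x) (- complex.Im x).

Lemma ReD x y : complex.Re (x + y) = complex.Re x + complex.Re y.
Proof. by case: x; case: y. Qed.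
Lemma ImD x y : complex.Im (x + y) = complex.Im x + complex.Im y.
Proof. by case: x; case: y. Qed.
Lemma ReN x : complex.Re (- x) = - complex.Re x.
Proof. by case: x. Qed.
Lemma ImN x : complex.Im (- x) = - complex.Im x.
Proof. by case: x. Qed.
Lemma ReB x y : complex.Re (x - y) = complex.Re x - complex.Re y.
Proof. by rewrite ReD ReN. Qed.
Lemma ImB x y : complex.Im (x - y) = complex.Im x - complex.Im y.
Proof. by rewrite ImD ImN. Qed.
Lemma ReM x y : complex.Re (x * y) = complex.Re x * complex.Re y - complex.Im x * complex.Im y.
Proof. by case: x; case: y. Qed.
Lemma ImM x y : complex.Im (x * y) = complex.Re x * complex.Im y + complex.Im x * complex.Re y.
Proof. by case: x => a b; case: y => c d /=. Qed.
Lemma ReC (k : R) : complex.Re (k%:C)%C = k. Proof. by []. Qed.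
Lemma ImC (k : R) : complex.Im (k%:C)%C = 0. Proof. by []. Qed.
Lemma Re1 : complex.Re (1 : R[i]) = 1. Proof. by []. Qed.
Lemma Im1 : complex.Im (1 : R[i]) = 0. Proof. by []. Qed.
Lemma ReV x : complex.Re (x^-1) = complex.Re x / nsq x.
Proof. by case: x. Qed.
Lemma ImV x : complex.Im (x^-1) = - complex.Im x / nsq x.
Proof. by case: x => a b /=; rewrite /nsq /= mulNr. Qed.
End H.

Section K.
Variable R : rcfType.
Implicit Types x y : R[i].
Local Notation Re := complex.Re.
Local Notation Im := complex.Im.

Lemma nsq_ge0 x : 0 <= nsq x.
Proof. by rewrite /nsq addr_ge0 // sqr_ge0. Qed.
Lemma nsqM x y : nsq (x * y) = nsq x * nsq y.
Proof. rewrite /nsq ReM ImM; ring. Qed.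
Lemma nsqV x : nsq (x^-1) = (nsq x)^-1.
Proof.
move: x => [a b]. rewrite /nsq ReV ImV /nsq /=.
have [->|hn] := eqVneq (a^+2 + b^+2) 0.
  by rewrite invr0 !mulr0 expr0n /= addr0.
field. exact: hn.
Qed.
Lemma Im2_le x : Im x ^+ 2 <= nsq x.
Proof. by rewrite /nsq lerDr sqr_ge0. Qed.
Lemma mul_cj x : x * cj x = (nsq x)%:C%C.
Proof. case: x => a b; rewrite /cj /nsq /=; apply/eqP; rewrite eq_complex /=; apply/andP; split; apply/eqP; ring. Qed.
Lemma nsq_cj x : nsq (cj x) = nsq x.
Proof. by rewrite /nsq /cj /= sqrrN. Qed.
Lemma cjV x : cj (x^-1) = (cj x)^-1.
Proof. case: x => a b; rewrite /cj /=; apply/eqP; rewrite eq_complex /=; apply/andP; split; apply/eqP; rewrite ?sqrrN; ring. Qed.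
Lemma cjB x y : cj (x - y) = cj x - cj y.
Proof. by case: x => a b; case: y => c d; rewrite /cj /= opprD. Qed.
Lemma cjD x y : cj (x + y) = cj x + cj y.
Proof. by case: x => a b; case: y => c d; rewrite /cj /= opprD. Qed.
Lemma cjC (k : R) : cj (k%:C)%C = (k%:C)%C.
Proof. by rewrite /cj /= oppr0. Qed.
Lemma ImV' x : Im (x^-1) = - Im x * nsq (x^-1).
Proof. by rewrite ImV nsqV mulNr. Qed.
Lemma neq0_Im x : Im x != 0 -> x != 0.
Proof. by apply: contra => /eqP ->. Qed.
Lemma ImCM (k : R) x : Im ((k%:C)%C * x) = k * Im x.
Proof. by rewrite ImM ReC ImC mul0r addr0. Qed.
Lemma ReCM (k : R) x : Re ((k%:C)%C * x) = k * Re x.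
Proof. by rewrite ReM ReC ImC mul0r subr0. Qed.
Lemma ImCj x : Im (cj x) = - Im x. Proof. by []. Qed.
Lemma ReCj x : Re (cj x) = Re x. Proof. by []. Qed.
Lemma nsq_half x y : nsq ((x + y) / 2) <= (nsq x + nsq y) / 2.
Proof.
have -> : (2 : R[i])^-1 = ((2 : R)^-1)%:C%C by rewrite fmorphV /= rmorph_nat.
rewrite mulrC /nsq ReCM ImCM ReD ImD.
set a := Re x; set b := Im x; set c := Re y; set d := Im y.
rewrite -subr_ge0.
have -> : (a ^+ 2 + b ^+ 2 + (c ^+ 2 + d ^+ 2)) / 2 -
  ((2^-1 * (a + c)) ^+ 2 + (2^-1 * (b + d)) ^+ 2) = ((a - c) ^+ 2 + (b - d) ^+ 2) / 4.
  by field.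
by rewrite divr_ge0 // addr_ge0 // sqr_ge0.
Qed.

Lemma ImH x : Im (x / 2) = Im x / 2.
Proof.
have -> : (2 : R[i])^-1 = ((2 : R)^-1)%:C%C by rewrite fmorphV /= rmorph_nat.
by rewrite [x * _]mulrC ImCM mulrC.
Qed.
Lemma ReH x : Re (x / 2) = Re x / 2.
Proof.
have -> : (2 : R[i])^-1 = ((2 : R)^-1)%:C%C by rewrite fmorphV /= rmorph_nat.
by rewrite [x * _]mulrC ReCM mulrC.
Qed.

Lemma key (u v : R[i]) (s w c : R) :
  0 < w -> w <= Im u -> w < Im v ->
  Im (v / ((s ^+ 2)%:C%C - v ^+ 2)) = Im v - w ->
  0 <= c -> c <= 1 -> c <= 2 * w * (1 - c) ->
  c ^+ 2 <= nsq (1 - ((s ^+ 2)%:C%C + u * v) / (((s ^+ 2)%:C%C - u ^+ 2) * ((s ^+ 2)%:C%C - v ^+ 2))).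
Proof.
move=> hw hu hv hfix hc0 hc1 hc2.
have e : (s ^+ 2)%:C%C = (s%:C%C) ^+ 2 :> R[i] by rewrite rmorphXn.
rewrite e in hfix *.
have : Im (s%:C)%C = 0 by [].
move: (s%:C)%C hfix => S hfix hS.
set vb := cj v.
have hIu : Im u != 0 by apply/lt0r_neq0/(lt_le_trans hw).
have hIv : Im v != 0 by apply/lt0r_neq0/(lt_trans hw).
have n1 : S - u != 0 by apply: neq0_Im; rewrite ImB hS sub0r oppr_eq0.
have n2 : S + u != 0 by apply: neq0_Im; rewrite ImD hS add0r.
have n3 : S - v != 0 by apply: neq0_Im; rewrite ImB hS sub0r oppr_eq0.
have n4 : S + v != 0 by apply: neq0_Im; rewrite ImD hS add0r.
have n5 : S - vb != 0 by apply: neq0_Im; rewrite ImB hS sub0r oppr_eq0 ImCj oppr_eq0.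
have n6 : S + vb != 0 by apply: neq0_Im; rewrite ImD hS add0r ImCj oppr_eq0.
have n2C : (2 : R[i]) != 0 by rewrite pnatr_eq0.
have n7 : S ^+ 2 - u ^+ 2 != 0 by rewrite subr_sqr mulf_neq0.
have n8 : S ^+ 2 - v ^+ 2 != 0 by rewrite subr_sqr mulf_neq0.
set A1 := (S - u)^-1; set A2 := (S + u)^-1.
set B1 := (S - v)^-1; set B2 := (S + v)^-1.
have hr : (S ^+ 2 + u * v) / ((S ^+ 2 - u ^+ 2) * (S ^+ 2 - v ^+ 2)) = (A1 * B1 + A2 * B2) / 2.
  rewrite /A1 /A2 /B1 /B2; field.
  by rewrite n1 n2 n3 n4 n7 n8.
have hg : v / (S ^+ 2 - v ^+ 2) = (B1 - B2) / 2.
  rewrite /B1 /B2; field.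
  by rewrite n3 n4 n8.
have cjS : cj S = S by move: hS; rewrite /cj; case: (S) => a b /= ->; rewrite oppr0.
have hB1' : cj B1 = (S - vb)^-1 by rewrite /B1 cjV cjB cjS.
have hB2' : cj B2 = (S + vb)^-1 by rewrite /B2 cjV cjD cjS.
set d1 := nsq B1 / 2; set d2 := nsq B2 / 2.
have e1 : (d1%:C)%C = B1 * (S - vb)^-1 / 2.
  by rewrite /d1 rmorphM fmorphV /= rmorph_nat -hB1' mul_cj.
have e2 : (d2%:C)%C = B2 * (S + vb)^-1 / 2.
  by rewrite /d2 rmorphM fmorphV /= rmorph_nat -hB2' mul_cj.
set D := u - vb.
have I1 : 1 - (A1 * B1 + A2 * B2) / 2 = 1 - (d1%:C)%C - (d2%:C)%C + D * ((d2%:C)%C * A2 - (d1%:C)%C * A1).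
  rewrite e1 e2 /D /A1 /A2 /B1 /B2; field.
  by rewrite n1 n2 n3 n4 n5 n6.
have ImA1 : Im A1 = Im u * nsq A1 by rewrite /A1 ImV' ImB hS sub0r opprK.
have ImA2 : Im A2 = - Im u * nsq A2 by rewrite /A2 ImV' ImD hS add0r.
have ImB1 : Im B1 = Im v * nsq B1 by rewrite /B1 ImV' ImB hS sub0r opprK.
have ImB2 : Im B2 = - Im v * nsq B2 by rewrite /B2 ImV' ImD hS add0r.
have hk : Im v * (d1 + d2) = Im v - w.
  by rewrite -hfix hg ImH ImB ImB1 ImB2 /d1 /d2; field.
rewrite hr.
set r := (A1 * B1 + A2 * B2) / 2.
set Q := 1 - r.
have hQ : Q * cj D = (1 - (d1%:C)%C - (d2%:C)%C) * cj D + ((nsq D)%:C)%C * ((d2%:C)%C * A2 - (d1%:C)%C * A1).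
  by rewrite /Q /r I1 -mul_cj; ring.
set K := d1 * nsq A1 + d2 * nsq A2.
set P := Im u + Im v.
set L2 := nsq D.
have hY : Im (Q * cj D) = - (1 - (d1 + d2)) * P - L2 * Im u * K.
  rewrite hQ ImD ImM !ReB !ImB Re1 Im1 !ReC !ImC ImCM ImB !ImCM ImCj ImA1 ImA2.
  rewrite /L2 /D ImB ImCj /P /K; ring.
have hnsqQ : nsq (Q * cj D) = nsq Q * L2 by rewrite nsqM nsq_cj.
have hYle : Im (Q * cj D) ^+ 2 <= nsq Q * L2 by rewrite -hnsqQ Im2_le.
have hrK : nsq r <= K.
  apply: (le_trans (nsq_half _ _)); rewrite !nsqM.
  have -> : (nsq A1 * nsq B1 + nsq A2 * nsq B2) / 2 = K by rewrite /K /d1 /d2; field.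
  by [].
have hK0 : 0 <= K by rewrite /K addr_ge0 // mulr_ge0 // ?divr_ge0 // nsq_ge0.
have hL2 : P ^+ 2 <= L2 by rewrite /L2 (le_trans _ (Im2_le _)) // /D ImB ImCj opprK.
have hP : 0 < P by rewrite /P; apply: addr_gt0; [apply: (lt_le_trans hw) | apply: (lt_trans hw)].
have hIu' : w <= Im u := hu.
have hnQ : nsq Q = (1 - Re r) ^+ 2 + Im r ^+ 2 by rewrite /nsq /Q ReB ImB Re1 Im1 sub0r sqrrN.
have hnr : nsq r = Re r ^+ 2 + Im r ^+ 2 by [].
case: (lerP K ((1 - c) ^+ 2)) => hKc.
  rewrite hnQ.
  have h1 : Re r ^+ 2 <= (1 - c) ^+ 2.
    by apply: le_trans hKc; apply: le_trans hrK; rewrite hnr lerDl sqr_ge0.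
  have h2 : Re r <= 1 - c.
    have hc1' : 0 <= 1 - c by rewrite subr_ge0.
    case: (lerP (Re r) (1 - c)) => // hh.
    have : (1 - c) ^+ 2 < Re r ^+ 2 by rewrite ltr_pXn2r // ?nnegrE //; apply: ltW (le_lt_trans hc1' hh).
    by rewrite ltNge h1.
  nra.
have hkv : (1 - (d1 + d2)) * Im v = w by rewrite mulrBl mul1r mulrC hk; ring.
have hIv0 : 0 < Im v by apply: (lt_trans hw).
have hk1 : 0 < 1 - (d1 + d2).
  by rewrite -(pmulr_lgt0 _ hIv0) hkv.
have hA : w <= (1 - (d1 + d2)) * P.
  rewrite /P mulrDr hkv lerDr; apply: mulr_ge0; [exact: ltW | exact: le_trans (ltW hw) hu].
have hL2pos : 0 < L2 by apply: lt_le_trans hL2; rewrite exprn_gt0.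
have hB : L2 * w * (1 - c) ^+ 2 <= L2 * Im u * K.
  rewrite -!mulrA ler_pM2l //; apply: ler_pM => //; [exact: ltW | exact: sqr_ge0 | exact: ltW].
set Y := Im (Q * cj D) in hY hYle.
have hY2 : (w + L2 * w * (1 - c) ^+ 2) ^+ 2 <= Y ^+ 2.
  have h0 : 0 <= w + L2 * w * (1 - c) ^+ 2.
    apply: addr_ge0; first exact: ltW.
    by apply: mulr_ge0; [apply: mulr_ge0; apply: ltW | exact: sqr_ge0].
  have hmY : w + L2 * w * (1 - c) ^+ 2 <= - Y.
    have -> : - Y = (1 - (d1 + d2)) * P + L2 * Im u * K by rewrite hY; ring.
    exact: lerD hA hB.
  rewrite -(sqrrN Y) ler_pXn2r // ?nnegrE //; exact: le_trans h0 hmY.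
have hAM : c ^+ 2 * L2 <= (w + L2 * w * (1 - c) ^+ 2) ^+ 2.
  have h3 : c ^+ 2 <= (2 * w * (1 - c)) ^+ 2.
    rewrite ler_pXn2r // ?nnegrE //; apply: le_trans hc0 hc2.
  have h4 : 4 * (w * w * (1 - c) ^+ 2) * L2 <= (w + L2 * w * (1 - c) ^+ 2) ^+ 2.
    rewrite -subr_ge0.
    have -> : (w + L2 * w * (1 - c) ^+ 2) ^+ 2 - 4 * (w * w * (1 - c) ^+ 2) * L2 = (w - L2 * w * (1 - c) ^+ 2) ^+ 2 by ring.
    exact: sqr_ge0.
  apply: le_trans h4; rewrite ler_pM2r //.
  by move: h3; rewrite !exprMn; nra.
have : c ^+ 2 * L2 <= nsq Q * L2 by apply: le_trans hAM (le_trans hY2 hYle).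
by rewrite ler_pM2r.
Qed.

End K.

Section E.
Variable R : realType.

Definition sqr_row n (x : 'rV[R[i]]_n) : R[i] := \sum_j x 0 j * (x 0 j)^*.

Lemma sqr_row_ge0 n (x : 'rV[R[i]]_n) : 0 <= sqr_row x.
Proof. by apply: sumr_ge0 => j _; exact: mul_conjC_ge0. Qed.

Lemma sqr_row_gt0 n (x : 'rV[R[i]]_n) : x != 0 -> 0 < sqr_row x.
Proof.
move=> hx.
have [j hj] : exists j, x 0 j != 0.
  apply/existsP; apply: contraR hx; rewrite negb_exists => /forallP h.
  by apply/eqP/rowP => j; rewrite mxE; apply/eqP; move: (h j); rewrite negbK.
rewrite /sqr_row (bigD1 j) //=; apply: ltr_pwDl; first by rewrite mul_conjC_gt0.
by apply: sumr_ge0 => k _; exact: mul_conjC_ge0.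
Qed.

Lemma mul_row_adj n (x : 'rV[R[i]]_n) : (x *m (map_mx Num.conj x)^T) 0 0 = sqr_row x.
Proof. by rewrite mxE; apply: eq_bigr => j _; rewrite !mxE. Qed.

Lemma eig_ge0 n (M : 'M[R[i]]_n) lam :
  root (char_poly (M *m adjmx M)) lam -> 0 <= lam.
Proof.
rewrite -eigenvalue_root_char => /eigenvalueP [v hv hv0].
have h : (v *m (M *m adjmx M)) *m (map_mx Num.conj v)^T = (lam *: v) *m (map_mx Num.conj v)^T by rewrite hv.
have e1 : (v *m (M *m adjmx M)) *m (map_mx Num.conj v)^T = (v *m M) *m (map_mx Num.conj (v *m M))^T.
  by rewrite /adjmx mulmxA -mulmxA -trmx_mul -map_mxM.
rewrite e1 -scalemxAl in h.
have := congr1 (fun A : 'M[R[i]]_1 => A 0 0) h; rewrite /= mul_row_adj [in RHS]mxE mul_row_adj => h2.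
have hp := sqr_row_gt0 hv0.
have -> : lam = sqr_row (v *m M) / sqr_row v by rewrite h2 mulfK // gt_eqF.
by rewrite divr_ge0 // ?sqr_row_ge0 // ltW.
Qed.
End E.


Section T.
Variable R : rcfType.
Local Notation Re := complex.Re.
Local Notation Im := complex.Im.

Lemma exists_sqrt (zeta : R[i]) : 0 < Im zeta -> exists om : R[i], om ^+ 2 = zeta /\ 0 < Im om.
Proof.
move=> h; set o := sqrtc zeta.
have ho : o ^+ 2 = zeta by exact: sqr_sqrtc.
have hIm : Im (o ^+ 2) = 2 * Re o * Im o by rewrite expr2 ImM; ring.
case: (ltrgtP (Im o) 0) => hi.
- by exists (- o); split; [rewrite sqrrN | rewrite ImN oppr_gt0].
- by exists o.
- by move: h; rewrite -ho hIm hi mulr0 ltxx.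
Qed.

Lemma Im_term (om x : R[i]) : 0 < Im om -> 0 <= x -> 0 <= Im (om * (x - om ^+ 2)^-1).
Proof.
move=> ho; rewrite lecE => /andP [/eqP hx hx'].
have hx0 : Im x = 0 by rewrite hx.
rewrite ImM ReV ImV ReB ImB expr2 ReM ImM hx0.
set N := nsq _.
have -> : Re om * (- (0 - (Re om * Im om + Im om * Re om)) / N) +
   Im om * ((Re x - (Re om * Re om - Im om * Im om)) / N) =
   (Im om * (Re om ^+ 2 + Re x + Im om ^+ 2)) * N^-1 by ring.
apply: mulr_ge0; last by rewrite invr_ge0 nsq_ge0.
apply: mulr_ge0; first exact: ltW.
by rewrite addr_ge0 ?sqr_ge0 // addr_ge0 ?sqr_ge0.
Qed.

Lemma Im_sum (om : R[i]) (s : seq R[i]) : 0 < Im om -> (forall x, x \in s -> 0 <= x) ->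
  0 <= Im (om * \sum_(x <- s) (x - om ^+ 2)^-1).
Proof.
move=> ho; elim: s => [|y s IH] h; first by rewrite big_nil mulr0.
rewrite big_cons mulrDr ImD addr_ge0 //.
  by apply: Im_term => //; apply: h; rewrite mem_head.
by apply: IH => x hx; apply: h; rewrite in_cons hx orbT.
Qed.
End T.

Theorem lemma3p5 (R : realType) (b m : nat) (hb : (0 < b)%N) (hm : (0 < m)%N)
  (D U T : nat -> 'M[R[i]]_b) (z : R[i]) (A : R) (hA : 1 < A)
  (nu : probability R R) (hnu0 : nu `]-oo, 0[ = 0%E)
  (hmz : forall zeta : R[i], 0 < complex.Im zeta ->
     stieltjes nu zeta = fz z zeta (stieltjes nu zeta) /\
     0 < complex.Im (stieltjes nu zeta) /\
     0 < complex.Im (zeta * stieltjes nu (zeta ^+ 2)))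
  (zeta : R[i]) (hre : - A < complex.Re zeta < A) (him : 0 < complex.Im zeta < 1)
  (s : seq R[i]) :
  let n := (m * b)%N in
  let X := ((Num.sqrt ((3 * b)%:R : R))^-1)%:C%C *: periodic_band m D U T in
  let Xz := X - z%:M in
  char_poly (Xz *m adjmx Xz) = \prod_(lam <- s) ('X - lam%:P) ->
  (complex.Im zeta / (4 * Num.sqrt A))%:C%C
    <= `|1 - rnz z zeta (emp_stieltjes n s zeta) (stieltjes nu zeta)|.
Proof.
move=> n X Xz hchar.
have hpos : forall lam, lam \in s -> 0 <= lam.
  by move=> lam hl; apply: (eig_ge0 (M := Xz)); rewrite hchar root_prod_XsubC.
move/andP: him => [hI0 hI1].
have [w0 [hw2 hwpos]] := exists_sqrt hI0.
have [hfixb [hImb _]] := hmz zeta hI0.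
have [_ [_ hwb]] := hmz w0 hwpos.
rewrite hw2 in hwb.
set bb := stieltjes nu zeta in hfixb hImb hwb *.
set a := emp_stieltjes n s zeta.
have hwa : 0 <= complex.Im (w0 * a).
  rewrite /a /emp_stieltjes mulrCA.
  have -> : ((n%:R : R[i])^-1) = ((n%:R : R)^-1)%:C%C by rewrite fmorphV /= rmorph_nat.
  rewrite ImCM mulr_ge0 // ?invr_ge0 ?ler0n // -hw2; exact: Im_sum.
set sz := Num.sqrt (complex.Re z ^+ 2 + complex.Im z ^+ 2).
have hz2 : `|z| ^+ 2 = (sz ^+ 2)%:C%C by rewrite normc_def rmorphXn.
set w := complex.Im w0.
set u := w0 * (1 + a).
set v := w0 * (1 + bb).
have hu : w <= complex.Im u by rewrite /u mulrDr mulr1 ImD lerDl.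
have hv : w < complex.Im v by rewrite /v mulrDr mulr1 ImD ltrDl.
have hw0 : w0 != 0 by apply: neq0_Im; rewrite gt_eqF.
have hu0 : u != 0 by apply: neq0_Im; rewrite gt_eqF // (lt_le_trans hwpos hu).
have hv0 : v != 0 by apply: neq0_Im; rewrite gt_eqF // (lt_trans hwpos hv).
have ha1 : 1 + a != 0 by apply: contra hu0 => /eqP h; rewrite /u h mulr0.
have hb1 : 1 + bb != 0 by apply: contra hv0 => /eqP h; rewrite /v h mulr0.
have hS : (sz ^+ 2)%:C%C = (sz%:C%C) ^+ 2 :> R[i] by rewrite rmorphXn.
have hIu : 0 < complex.Im u := lt_le_trans hwpos hu.
have hIv : 0 < complex.Im v := lt_trans hwpos hv.
have htu : (sz ^+ 2)%:C%C - u ^+ 2 != 0.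
  rewrite hS subr_sqr; apply: mulf_neq0; apply: neq0_Im.
    by rewrite ImB ImC sub0r oppr_eq0 gt_eqF.
  by rewrite ImD ImC add0r gt_eqF.
have htv : (sz ^+ 2)%:C%C - v ^+ 2 != 0.
  rewrite hS subr_sqr; apply: mulf_neq0; apply: neq0_Im.
    by rewrite ImB ImC sub0r oppr_eq0 gt_eqF.
  by rewrite ImD ImC add0r gt_eqF.
have hr : rnz z zeta a bb = ((sz ^+ 2)%:C%C + u * v) / (((sz ^+ 2)%:C%C - u ^+ 2) * ((sz ^+ 2)%:C%C - v ^+ 2)).
  rewrite /rnz /fz hz2 -hw2.
  have htu' := htu; have htv' := htv.
  rewrite /u in htu'; rewrite /v in htv'; rewrite /u /v.
  move: ((sz ^+ 2)%:C%C) htu' htv' => t htu' htv'.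
  field.
  by rewrite htu' htv' hb1 ha1.
have hfix : complex.Im (v / ((sz ^+ 2)%:C%C - v ^+ 2)) = complex.Im v - w.
  have e : v / ((sz ^+ 2)%:C%C - v ^+ 2) = w0 * bb.
    rewrite [in RHS]hfixb /fz hz2 -hw2.
    have htv' := htv; rewrite /v in htv'; rewrite /v.
    move: ((sz ^+ 2)%:C%C) htv' => t htv'.
    field.
    rewrite hb1 /=.
    suff -> : t + - ((1 + bb) * w0 ^+ 2) * (1 + bb) = t - (w0 * (1 + bb)) ^+ 2 by [].
    ring.
  by rewrite e /v mulrDr mulr1 ImD addrAC subrr add0r.
set c := complex.Im zeta / (4 * Num.sqrt A).
have hsA : 1 <= Num.sqrt A by rewrite -sqrtr1 ler_wsqrtr // ltW.
have hsA2 : Num.sqrt A ^+ 2 = A by rewrite sqr_sqrtr // ltW // (lt_trans ltr01 hA).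
have hc4 : c * (4 * Num.sqrt A) = complex.Im zeta by rewrite /c mulfVK // gt_eqF // mulr_gt0 // (lt_le_trans ltr01 hsA).
have hc0 : 0 <= c by rewrite /c divr_ge0 // ?ltW // mulr_ge0 // (le_trans ler01 hsA).
have hc14 : c < 1 / 4.
  have : c * (4 * Num.sqrt A) < 1 by rewrite hc4.
  by nra.
have hc1 : c <= 1 by lra.
set p := complex.Re w0.
have hImz : complex.Im zeta = 2 * p * w by rewrite -hw2 expr2 ImM /p /w; ring.
have hRez : complex.Re zeta = p ^+ 2 - w ^+ 2 by rewrite -hw2 expr2 ReM /p /w; ring.
have hp0 : 0 < p.
  have : 0 < 2 * p * w by rewrite -hImz.
  by rewrite -mulrA pmulr_rgt0 // pmulr_lgt0.
move/andP: hre => [hre1 hre2].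
have hp3 : p <= 3 * Num.sqrt A.
  case: (lerP p 1) => hp1; first by apply: le_trans hp1 _; nra.
  have hw12 : w < 1 / 2 by nra.
  have hpp : p ^+ 2 <= (3 * Num.sqrt A) ^+ 2 by rewrite exprMn hsA2; nra.
  case: (lerP p (3 * Num.sqrt A)) => // hlt.
  have hq : 0 <= 3 * Num.sqrt A by nra.
  by exfalso; nra.
have hc2 : c <= 2 * w * (1 - c).
  have h1 : c * (4 * Num.sqrt A) <= 6 * Num.sqrt A * w by rewrite hc4 hImz; nra.
  have h2 : c <= 3 / 2 * w by nra.
  nra.
have := key hwpos hu hv hfix hc0 hc1 hc2.
rewrite -hr => hk.
rewrite normc_def lecR.
rewrite -(ger0_norm hc0) -sqrtr_sqr ler_wsqrtr //.
Qed.
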